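(* Let $m\ge 1$, $P,Q\ge 0$ be integers with $N=P+Q\ge1$, let $D$, $F_1,\ldots,F_m$, $\mathcal{E}$, $d$ and $G_F:\mathcal{E}\to\mathcal{E}$ be as described in the context, and assume that the state network of $G_F$ is strongly connected. Then $G_F$ is chaotic in the sense of Devaney on $(\mathcal{E},d)$: it is topologically transitive, its periodic points are dense in $\mathcal{E}$, and it has sensitive dependence on initial conditions (there is $\delta>0$ such that for every $E\in\mathcal{E}$ and every $\varepsilon>0$ there exist $E'\in\mathcal{E}$ with $d(E,E')<\varepsilon$ and $n\ge0$ with $d(G_F^n(E),G_F^n(E'))>\delta$).
   Context: Let $D=\{k\,2^{-Q}: k=0,1,\ldots,2^N-1\}$ be the set of $N$-bit fixed-point numbers; each $x\in D$ is written in binary as $x=x_{P-1}x_{P-2}\ldots x_0.x_{-1}\ldots x_{-Q}$ with digits $x_j\in\{0,1\}$. For $x,y\in D$ let $x\cdot y$, $x+y$ and $\overline{x}$ denote bitwise AND, bitwise OR and bitwise NOT (complement of every one of the $N$ digits), which are again elements of $D$. Let $F_1,\ldots,F_m:D^m\to D$ be arbitrary functions. Let $\Sigma$ be the set of one-sided infinite sequences $w=w^1w^2\ldots$ with $w^k\in D$, and $\sigma:\Sigma\to\Sigma$ the left shift $\sigma(w)=w^2w^3\ldots$. Let $\mathcal{E}=\Sigma^m\times D^m$, with elements $E=((w_1,\ldots,w_m),(x_1,\ldots,x_m))$. Define $G_F:\mathcal{E}\to\mathcal{E}$ by $G_F((w_1,\ldots,w_m),x)=((\sigma(w_1),\ldots,\sigma(w_m)),(H_1,\ldots,H_m))$,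 where $x=(x_1,\ldots,x_m)$ and $H_i=(x_i\cdot\overline{w_i^1})+(F_i(x)\cdot w_i^1)$ (i.e. bit $j$ of $x_i$ is replaced by bit $j$ of $F_i(x)$ exactly when bit $j$ of $w_i^1$ is $1$). The metric on $\mathcal{E}$ is $d(E,\hat E)=\sum_{i=1}^m\sum_{k=1}^\infty \frac{|w_i^k-\hat w_i^k|}{2^{Nk}}+\sqrt{\sum_{i=1}^m (x_i-\hat x_i)^2}$. The state network of $G_F$ is the directed graph whose vertex set is $D^m$, with an edge from $\hat x$ to $\tilde x$ whenever there is some $(w_1,\ldots,w_m)\in\Sigma^m$ such that the $D^m$-component of $G_F((w_1,\ldots,w_m),\hat x)$ equals $\tilde x$. It is strongly connected if every vertex is reachable from every other vertex by a directed path. *)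

(* Defs.v *)
From Stdlib Require Import Reals Relations.
From Coquelicot Require Import Coquelicot.
From mathcomp Require Import all_boot.

Set Implicit Arguments.
Unset Strict Implicit.

(* An N-bit fixed-point number (N = P + Q) given by its binary digits:
   digit j : 'I_(P+Q) is the digit of weight 2^(j - Q), i.e. digit x_{j-Q}
   in the notation x_{P-1} ... x_0 . x_{-1} ... x_{-Q}. *)
Definition FixPt (P Q : nat) := {ffun 'I_(P + Q) -> bool}.

Definition Dval (P Q : nat) (x : FixPt P Q) : R :=
  \big[Rplus/R0]_(j < P + Q)
     (if x j then powerRZ 2 (Z.of_nat (nat_of_ord j) - Z.of_nat Q) else R0).

Definition dand P Q (x y : FixPt P Q) : FixPt P Q := [ffun j => x j && y j].
Definition dor  P Q (x y : FixPt P Q) : FixPt P Q := [ffun j => x j || y j].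
Definition dnot P Q (x : FixPt P Q) : FixPt P Q := [ffun j => ~~ x j].

(* Sigma: one-sided sequences w = w^1 w^2 ...; w n stands for w^(n+1). *)
Definition Seq P Q := nat -> FixPt P Q.
Definition shift P Q (w : Seq P Q) : Seq P Q := fun n => w (S n).

Definition Phase (m P Q : nat) := (('I_m -> Seq P Q) * ('I_m -> FixPt P Q))%type.

Definition GF (m P Q : nat) (F : 'I_m -> ('I_m -> FixPt P Q) -> FixPt P Q)
  (E : Phase m P Q) : Phase m P Q :=
  let (w, x) := E in
  (fun i => shift (w i),
   fun i => dor (dand (x i) (dnot (w i 0%nat))) (dand (F i x) (w i 0%nat))).

Definition dE (m P Q : nat) (E E' : Phase m P Q) : R :=
  let (w, x) := E in let (w', x') := E' in
  (\big[Rplus/R0]_(i < m)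
      Series (fun n => Rabs (Dval (w i n) - Dval (w' i n)) / 2 ^ ((P + Q) * (S n))%nat))
  + sqrt (\big[Rplus/R0]_(i < m) (Dval (x i) - Dval (x' i)) ^ 2).

Definition sn_edge (m P Q : nat) (F : 'I_m -> ('I_m -> FixPt P Q) -> FixPt P Q)
  (xh xt : 'I_m -> FixPt P Q) : Prop :=
  exists w : 'I_m -> Seq P Q, snd (GF F (w, xh)) = xt.

Definition strongly_connected (m P Q : nat) (F : 'I_m -> ('I_m -> FixPt P Q) -> FixPt P Q) :=
  forall a b : 'I_m -> FixPt P Q, clos_refl_trans _ (sn_edge F) a b.

Definition d_open (X : Type) (d : X -> X -> R) (U : X -> Prop) : Prop :=
  forall x, U x -> exists eps, Rlt R0 eps /\ forall y, (Rlt (d x y) eps) -> U y.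

Definition top_transitive (X : Type) (d : X -> X -> R) (f : X -> X) : Prop :=
  forall U V : X -> Prop, d_open d U -> d_open d V ->
    (exists x, U x) -> (exists y, V y) ->
    exists k, (1 <= k)%nat /\ exists x, U x /\ V (Nat.iter k f x).

Definition periodic_point (X : Type) (f : X -> X) (x : X) : Prop :=
  exists n, (1 <= n)%nat /\ Nat.iter n f x = x.

Definition dense_periodic (X : Type) (d : X -> X -> R) (f : X -> X) : Prop :=
  forall x eps, Rlt R0 eps -> exists y, periodic_point f y /\ (Rlt (d x y) eps).

Definition sensitive (X : Type) (d : X -> X -> R) (f : X -> X) : Prop :=
  exists delta, Rlt R0 delta /\
    forall x eps, Rlt R0 eps -> exists y n,
      (Rlt (d x y) eps) /\ Rgt (d (Nat.iter n f x) (Nat.iter n f y)) delta.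

Definition devaney_chaotic (X : Type) (d : X -> X -> R) (f : X -> X) : Prop :=
  top_transitive d f /\ dense_periodic d f /\ sensitive d f.

(* Main.v *)
Require Import Defs.
From HB Require Import structures.
From Stdlib Require Import Reals Lra Lia Relations FunctionalExtensionality.
From Coquelicot Require Import Coquelicot.
From mathcomp Require Import all_boot zify.

Set Implicit Arguments.
Unset Strict Implicit.

HB.instance Definition _ := Monoid.isComLaw.Build R R0 Rplus (fun a b c => esym (Rplus_assoc a b c)) Rplus_comm Rplus_0_l.

Open Scope R_scope.

Lemma bigR_ge0 (n : nat) (Fn : 'I_n -> R) :
  (forall i, 0 <= Fn i) -> 0 <= \big[Rplus/R0]_(i < n) Fn i.
Proof. move=> H; apply: big_ind => //; [lra| move=> a b; intros; lra]. Qed.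

Lemma bigR_ge_term (n : nat) (Fn : 'I_n -> R) i0 :
  (forall i, 0 <= Fn i) -> Fn i0 <= \big[Rplus/R0]_(i < n) Fn i.
Proof.
move=> H; rewrite (bigD1 i0) //=.
apply: (Rle_trans _ (Fn i0 + 0)); first lra.
apply Rplus_le_compat_l; apply: big_ind => //; [lra| move=> a b; intros; lra].
Qed.

Lemma bigR_le (n : nat) (Fn : 'I_n -> R) c :
  (forall i, Fn i <= c) -> \big[Rplus/R0]_(i < n) Fn i <= INR n * c.
Proof.
elim: n Fn => [|n IH] Fn H.
  rewrite big_ord0 /=; intros; lra.
rewrite S_INR big_ord_recr /=.
rewrite Rmult_plus_distr_r Rmult_1_l; apply Rplus_le_compat; [apply: IH => i; apply H| apply H].
Qed.

Definition ones P Q : FixPt P Q := [ffun _ => true].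
Definition zeros P Q : FixPt P Q := [ffun _ => false].

Lemma Dval_bounds P Q (x : FixPt P Q) : 0 <= Dval x <= Dval (ones P Q).
Proof.
rewrite /Dval.
apply: (big_ind2 (fun a b => 0 <= a <= b)); [lra| move=> a b c d; lra|].
move=> j _; rewrite /ones ffunE.
have := powerRZ_lt 2 (Z.of_nat j - Z.of_nat Q) ltac:(lra).
case: (x j); intros; lra.
Qed.

Lemma Dval_zeros P Q : Dval (zeros P Q) = 0.
Proof. rewrite /Dval big1 // => j _; by rewrite /zeros ffunE. Qed.

Lemma Dval_ones_pos P Q : (1 <= P + Q)%N -> 0 < Dval (ones P Q).
Proof.
move=> H; rewrite /Dval (bigD1 (Ordinal H)) //= /ones ffunE.
apply Rplus_lt_le_0_compat; first by apply powerRZ_lt; lra.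
apply: big_ind => //; [lra| intros; lra| move=> j _; rewrite ffunE; apply Rlt_le, powerRZ_lt; lra].
Qed.

Lemma Dval_diff P Q (a b : FixPt P Q) : Rabs (Dval a - Dval b) <= Dval (ones P Q).
Proof.
have := Dval_bounds a; have := Dval_bounds b.
move=> h1 h2; apply Rabs_le; intros; lra.
Qed.

Lemma term_le P Q (a b : FixPt P Q) n : (1 <= P + Q)%N ->
  Rabs (Dval a - Dval b) / 2 ^ ((P + Q) * (S n))%N <= Dval (ones P Q) * (/2) ^ (S n).
Proof.
move=> H.
have h1 : 2 ^ (S n) <= 2 ^ ((P + Q) * S n)%N.
  apply Rle_pow; first lra. apply/leP; exact: leq_pmull.
have h2 : 0 < 2 ^ (S n) by apply pow_lt; lra.
rewrite pow_inv /Rdiv; apply Rmult_le_compat.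
- exact: Rabs_pos.
- apply Rlt_le, Rinv_0_lt_compat; lra.
- exact: Dval_diff.
- exact: Rinv_le_contravar.
Qed.

Lemma ex_series_geomS B : ex_series (fun n => B * (/2) ^ (S n)).
Proof.
have H : Rabs (/2) < 1 by rewrite Rabs_pos_eq; lra.
have := is_series_scal_l (B / 2) _ _ (is_series_geom _ H).
move=> h; eexists; apply: (is_series_ext _ _ _ _ h) => n.
rewrite /scal /= /mult /= /=. simpl. field.
Qed.

Lemma ex_series_term P Q (w w' : nat -> FixPt P Q) : (1 <= P + Q)%N ->
  ex_series (fun n => Rabs (Dval (w n) - Dval (w' n)) / 2 ^ ((P + Q) * (S n))%N).
Proof.
move=> H; apply: (ex_series_le _ _ _ (ex_series_geomS (Dval (ones P Q)))) => n.
have h : 0 <= Rabs (Dval (w n) - Dval (w' n)) / 2 ^ ((P + Q) * (S n))%N.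
  apply Rmult_le_pos; first exact: Rabs_pos.
  apply Rlt_le, Rinv_0_lt_compat, pow_lt; lra.
rewrite /norm /= /abs /= Rabs_pos_eq //. exact: term_le.
Qed.

Lemma Series_tail (t : nat -> R) B K :
  (forall n, 0 <= t n <= B * (/2) ^ (S n)) -> (forall n, (n < K)%N -> t n = 0) ->
  Series t <= 2 * (B * (/2) ^ (S K)).
Proof.
move=> Hb Hz.
rewrite (Series_incr_n_aux t K); last by move=> k /ltP; apply Hz.
have H : Rabs (/2) < 1 by rewrite Rabs_pos_eq; lra.
have -> : 2 * (B * (/2) ^ (S K)) = Series (fun k => (B * (/2) ^ (S K)) * (/2)^k).
  rewrite Series_scal_l (is_series_unique _ _ (is_series_geom _ H)); field.
apply Series_le.
  move=> k; have := Hb (K + k)%coq_nat.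
  replace (S (K + k)%coq_nat) with (S K + k)%coq_nat by lia.
  rewrite pow_add; lra.
eexists; apply: is_series_scal_l; exact: is_series_geom.
Qed.

Lemma Series_ge0 (t : nat -> R) : (forall n, 0 <= t n) -> ex_series t -> 0 <= Series t.
Proof.
move=> H E.
have -> : 0 = Series (fun n => 0 * t n) by rewrite Series_scal_l; ring.
apply Series_le => // n; have := H n; lra.
Qed.

Lemma Series_ge_first (t : nat -> R) : (forall n, 0 <= t n) -> ex_series t -> t O <= Series t.
Proof.
move=> H E; rewrite Series_incr_1 //.
have : 0 <= Series (fun k => t (S k)).
  apply Series_ge0 => //. by apply (ex_series_incr_1 t).
lra.
Qed.

Lemma dE_same_x m P Q (w w' : 'I_m -> Seq P Q) x :
  dE (w, x) (w', x) = \big[Rplus/R0]_(i < m)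
      Series (fun n => Rabs (Dval (w i n) - Dval (w' i n)) / 2 ^ ((P + Q) * (S n))%N).
Proof.
rewrite /dE [X in sqrt X]big1 => [|i _].
  by rewrite (_ : R0 = 0) // sqrt_0 Rplus_0_r.
rewrite Rminus_diag_eq //; ring.
Qed.

Lemma dE_ge m P Q (w w' : 'I_m -> Seq P Q) x x' i0 : (1 <= P + Q)%N ->
  Series (fun n => Rabs (Dval (w i0 n) - Dval (w' i0 n)) / 2 ^ ((P + Q) * (S n))%N)
  <= dE (w, x) (w', x').
Proof.
move=> H; rewrite /dE.
apply: (Rle_trans _ (\big[Rplus/R0]_(i < m)
      Series (fun n => Rabs (Dval (w i n) - Dval (w' i n)) / 2 ^ ((P + Q) * (S n))%N) + 0)).
  rewrite Rplus_0_r; apply: bigR_ge_term => i.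
  apply: Series_ge0; last exact: ex_series_term.
  move=> n; apply Rmult_le_pos; first exact: Rabs_pos.
  apply Rlt_le, Rinv_0_lt_compat, pow_lt; lra.
apply Rplus_le_compat_l, sqrt_pos.
Qed.

Lemma close m P Q : (1 <= P + Q)%N -> forall eps, 0 < eps -> exists K, (1 <= K)%N /\
  forall (w w' : 'I_m -> Seq P Q) x, (forall i k, (k < K)%N -> w i k = w' i k) ->
  dE (w, x) (w', x) < eps.
Proof.
move=> HN eps Heps.
set B := Dval (ones P Q).
have HB : 0 <= B by case: (Dval_bounds (ones P Q)).
set C := 2 * INR m * B.
have HC : 0 <= C by rewrite /C; have := pos_INR m; move=> *; apply Rmult_le_pos => //; lra.
have H2 : Rabs (/2) < 1 by rewrite Rabs_pos_eq; lra.
have Hy : 0 < eps / (C + 1) by apply Rdiv_lt_0_compat; lra.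
have [N0 HN0] := pow_lt_1_zero _ H2 _ Hy.
exists (S N0); split => // w w' x Hag.
rewrite dE_same_x.
apply: (Rle_lt_trans _ (INR m * (2 * (B * (/2) ^ (S (S N0)))))).
  apply: bigR_le => i; apply: Series_tail.
    move=> n; split; last exact: term_le.
    apply Rmult_le_pos; first exact: Rabs_pos.
    apply Rlt_le, Rinv_0_lt_compat, pow_lt; lra.
  move=> n Hn; rewrite Hag // Rminus_diag_eq // Rabs_R0 /Rdiv; ring.
have := HN0 (S (S N0)) ltac:(lia).
have Hp : 0 < (/2) ^ (S (S N0)) by apply pow_lt; lra.
rewrite Rabs_pos_eq; last lra.
set p := (/2) ^ (S (S N0)) in Hp *.
move=> Hlt.
have -> : INR m * (2 * (B * p)) = C * p by rewrite /C; ring.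
have : (C + 1) * p < (C + 1) * (eps / (C + 1)) by apply Rmult_lt_compat_l; lra.
have -> : (C + 1) * (eps / (C + 1)) = eps by field; lra.
nra.
Qed.

Section Dyn.
Variables (m P Q : nat) (F : 'I_m -> ('I_m -> FixPt P Q) -> FixPt P Q).

Definition step (x : 'I_m -> FixPt P Q) (s : 'I_m -> FixPt P Q) : 'I_m -> FixPt P Q :=
  fun i => dor (dand (x i) (dnot (s i))) (dand (F i x) (s i)).

Fixpoint traj (s : nat -> 'I_m -> FixPt P Q) (x : 'I_m -> FixPt P Q) (n : nat) :=
  match n with O => x | S n => step (traj s x n) (s n) end.

Definition seqOf (w : 'I_m -> Seq P Q) : nat -> 'I_m -> FixPt P Q := fun k i => w i k.
Definition phOf (s : nat -> 'I_m -> FixPt P Q) : 'I_m -> Seq P Q := fun i k => s k i.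

Lemma iterGF n w x : Nat.iter n (GF F) (w, x) =
  (fun i k => w i (n + k)%N, traj (seqOf w) x n).
Proof.
elim: n => [|n IH] /=.
  f_equal; apply functional_extensionality => i; by apply functional_extensionality.
rewrite IH /GF; f_equal.
  apply functional_extensionality => i; apply functional_extensionality => k.
  by rewrite /shift addnS addSn.
by rewrite addn0.
Qed.

Lemma traj_agree s s' x n : (forall k, (k < n)%N -> s k = s' k) -> traj s x n = traj s' x n.
Proof.
elim: n => [//|n IH] H /=.
rewrite IH => [|k Hk]; last by apply H; apply: ltnW.
by rewrite H.
Qed.

Lemma traj_add s x a b : traj s x (a + b) = traj (fun n => s (a + n)%N) (traj s x a) b.
Proof.
elim: b => [|b IH]; first by rewrite addn0.
by rewrite addnS /= IH.
Qed.

Lemma reach a b : clos_refl_trans _ (sn_edge F) a b ->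
  exists L s, traj s a L = b.
Proof.
elim => {a b}.
- move=> a b [w Hw]; exists 1%N, (fun _ i => w i O); by rewrite -Hw.
- move=> a; by exists O, (fun _ => a).
- move=> a b c _ [L1 [s1 H1]] _ [L2 [s2 H2]].
  exists (L1 + L2)%N, (fun n => if (n < L1)%N then s1 n else s2 (n - L1)%N).
  rewrite traj_add (@traj_agree _ s1 a L1); last by move=> k Hk; rewrite Hk.
  rewrite H1 -H2; apply: traj_agree => k _.
  by rewrite ltnNge leq_addr /= addKn.
Qed.

End Dyn.

Lemma funext2 {A B C : Type} (f g : A -> B -> C) : (forall a b, f a b = g a b) -> f = g.
Proof. move=> H; apply functional_extensionality => a; apply functional_extensionality => b; exact: H. Qed.

Theorem mainTheorem4 (m P Q : nat) (F : 'I_m -> ('I_m -> FixPt P Q) -> FixPt P Q) :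
  (1 <= m)%nat -> (1 <= P + Q)%nat -> strongly_connected F ->
  devaney_chaotic (@dE m P Q) (GF F).
Proof.
move=> Hm HN Hsc; split; [|split].
-
  move=> U V HU HV [[w x] HE] [[w' x'] HE'].
  have [eps [Heps Hb]] := HU _ HE.
  have [K [HK Hc]] := @close m P Q HN eps Heps.
  set xK := traj F (seqOf w) x K.
  have [L [s Hs]] := reach (Hsc xK x').
  set sn := fun n => if (n < K)%N then seqOf w n else if (n < K + L)%N then s (n - K)%N
                     else seqOf w' (n - K - L)%N.
  exists (K + L)%N; split; first by lia.
  exists (phOf sn, x); split.
    apply Hb, Hc => i k Hk; by rewrite /phOf /sn Hk.
  rewrite iterGF.
  have -> : (fun i k => phOf sn i (K + L + k)%N) = w'.
    apply funext2 => i k; rewrite /phOf /sn.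
    have -> : (K + L + k < K)%N = false by lia.
    have -> : (K + L + k < K + L)%N = false by lia.
    by rewrite /seqOf (_ : (K + L + k - K - L = k)%N) //; lia.
  have -> : traj F (seqOf (phOf sn)) x (K + L) = x'.
    rewrite traj_add (@traj_agree _ _ _ F _ (seqOf w) x K); last first.
      by move=> k Hk; rewrite /seqOf /phOf /sn Hk.
    rewrite -/xK -Hs; apply: traj_agree => k Hk; rewrite /seqOf /phOf /sn.
    have -> : (K + k < K)%N = false by lia.
    have -> : (K + k < K + L)%N = true by lia.
    by rewrite (_ : (K + k - K = k)%N) //; lia.
  exact: HE'.
-
  move=> [w x] eps Heps.
  have [K [HK Hc]] := @close m P Q HN eps Heps.
  set xK := traj F (seqOf w) x K.
  have [L [s Hs]] := reach (Hsc xK x).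
  set p := (K + L)%N.
  set sp := fun n => let r := (n %% p)%N in if (r < K)%N then seqOf w r else s (r - K)%N.
  have HsK : forall k, (k < K)%N -> sp k = seqOf w k.
    move=> k Hk; rewrite /sp /= modn_small ?Hk //; rewrite /p; lia.
  exists (phOf sp, x); split; last first.
    apply Hc => i k Hk; by rewrite /phOf HsK.
  exists p; split; first by rewrite /p; lia.
  rewrite iterGF; f_equal.
    apply funext2 => i k; by rewrite /phOf /sp /= modnDl.
  rewrite traj_add (@traj_agree _ _ _ F _ (seqOf w) x K); last first.
    by move=> k Hk; apply: HsK.
  rewrite -/xK -Hs; apply: traj_agree => k Hk; rewrite /seqOf /phOf /sp /=.
  rewrite modn_small; last by rewrite /p; lia.
  have -> : (K + k < K)%N = false by lia.
  by rewrite (_ : (K + k - K = k)%N) //; lia.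
-
  set c := Dval (ones P Q).
  have Hc0 : 0 < c by apply: Dval_ones_pos.
  have HT : 0 < 2 ^ (P + Q) by apply pow_lt; lra.
  exists (c / (4 * 2 ^ (P + Q))); split.
    apply Rdiv_lt_0_compat; lra.
  move=> [w x] eps Heps.
  have [K [HK Hc]] := @close m P Q HN eps Heps.
  set i0 : 'I_m := Ordinal Hm.
  set a := w i0 K.
  set b := if Rle_dec (Dval a) (c / 2) then ones P Q else zeros P Q.
  set w' := fun i k => if (i == i0) && (k == K) then b else w i k.
  have Hag : forall i k, (k < K)%N -> w i k = w' i k.
    by move=> i k Hk; rewrite /w' (ltn_eqF Hk) andbF.
  exists (w', x), K; split; first exact: Hc.
  rewrite !iterGF.
  rewrite (@traj_agree _ _ _ F (seqOf w') (seqOf w) x K); last first.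
    move=> k Hk; apply functional_extensionality => i; by rewrite /seqOf Hag.
  apply: Rlt_le_trans; last exact: (dE_ge _ _ _ _ i0 HN).
  apply: Rlt_le_trans; last first.
    apply: Series_ge_first; last exact: ex_series_term.
    move=> n; apply Rmult_le_pos; first exact: Rabs_pos.
    apply Rlt_le, Rinv_0_lt_compat, pow_lt; lra.
  rewrite /= addn0 muln1 /w' eqxx /=.
  have Hab : c / 2 <= Rabs (Dval a - Dval b).
    rewrite /b; case: Rle_dec => h.
      rewrite -Rabs_Ropp; apply: Rle_trans (Rle_abs _); rewrite -/c; lra.
    rewrite Dval_zeros; apply: Rle_trans (Rle_abs _); lra.
  rewrite -/a.
  apply: (Rlt_le_trans _ (c / 2 / 2 ^ (P + Q))).
    have -> : c / (4 * 2 ^ (P + Q)) = (c / 2 / 2 ^ (P + Q)) / 2 by field; lra.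
    have : 0 < c / 2 / 2 ^ (P + Q) by apply Rdiv_lt_0_compat; lra.
    lra.
  apply Rmult_le_compat_r; first by apply Rlt_le, Rinv_0_lt_compat; lra.
  by rewrite eqxx.
Qed.
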